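(* Let $G$ be a finite, simple, connected graph and let $v \in V(G)$ be a vertex that is not a cut vertex of $G$. Then $$\chi_{dd}(G)-1 \leq \chi_{dd}(G-v) \leq \chi_{dd}(G)+\deg(v)-1,$$ where $G-v$ is the graph obtained from $G$ by deleting $v$ and all edges incident with $v$, and $\deg(v)$ is the degree of $v$ in $G$.
   Context: All graphs are finite, undirected and simple. For a vertex $w$, $N(w)$ is its open neighborhood and $N[w]=N(w)\cup\{w\}$ its closed neighborhood. A vertex $w$ dominates a set $S$ of vertices if $S \subseteq N[w]$. A domination coloring of a graph $H$ is a proper vertex coloring of $H$ (adjacent vertices receive different colors; a color class is the set of all vertices receiving a given color) such that every vertex of $H$ dominates at least one color class (possibly its own class), and every color class is dominated by at least one vertex of $H$. The domination chromatic number $\chi_{dd}(H)$ is the minimum number of color classes in a domination coloring of $H$. *)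

(* Defs.v *)
From mathcomp Require Import all_boot.
Set Implicit Arguments. Unset Strict Implicit. Unset Printing Implicit Defensive.

Definition simple_graph (T : finType) (e : rel T) : Prop :=
  symmetric e /\ irreflexive e.

Definition cnbhd (T : finType) (e : rel T) (w : T) : {set T} :=
  [set u | (u == w) || e w u].

Definition deg (T : finType) (e : rel T) (v : T) : nat := #|[set u | e v u]|.

Definition connected_graph (T : finType) (e : rel T) : Prop :=
  forall x y : T, connect e x y.

Definition del_vertex_type (T : finType) (v : T) : finType := {x : T | x != v}.
Definition del_vertex (T : finType) (e : rel T) (v : T) : rel (del_vertex_type v) :=
  fun x y => e (val x) (val y).

(* v is a cut vertex: deleting v increases the number of components, i.e. some two
   vertices other than v connected in G are disconnected in G - v *)
Definition cut_vertex (T : finType) (e : rel T) (v : T) : Prop :=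
  exists x y : del_vertex_type v,
    connect e (val x) (val y) /\ ~~ connect (@del_vertex T e v) x y.

(* A domination coloring given by its set P of color classes: P partitions V,
   each class is independent (proper coloring), every vertex dominates some class,
   every class is dominated by some vertex. *)
Definition dom_coloring (T : finType) (e : rel T) (P : {set {set T}}) : bool :=
  [&& partition P [set: T],
      [forall A in P, forall x in A, forall y in A, ~~ e x y],
      [forall w : T, exists A in P, A \subset cnbhd e w] &
      [forall A in P, exists w : T, A \subset cnbhd e w]].

(* domination chromatic number: minimum number of color classes.
   (The singleton partition is a domination coloring with #|T| classes,
   so the default value #|T| of the min does not affect the result.) *)
Definition chi_dd (T : finType) (e : rel T) : nat :=
  \big[minn/#|T|]_(P : {set {set T}} | dom_coloring e P) #|P|.

(* Main.v *)
Require Import Defs.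
From mathcomp Require Import all_boot zify.
Set Implicit Arguments. Unset Strict Implicit. Unset Printing Implicit Defensive.

Definition dcol (T K : finType) (e : rel T) (f : T -> K) : Prop :=
  [/\ forall x y, e x y -> f x != f y,
      forall w, exists y, forall z, f z = f y -> z = w \/ e w z &
      forall y, exists w, forall z, f z = f y -> z = w \/ e w z].

Lemma bigmin_le (I : finType) (A : pred I) (F : I -> nat) x i0 :
  A i0 -> \big[minn/x]_(i | A i) F i <= F i0.
Proof.
move=> Ai0; rewrite /index_enum; have : i0 \in (Finite.enum I) by rewrite -enumT mem_enum.
elim: (Finite.enum I) => [|a r IH] //; rewrite in_cons big_cons.
case/orP=> [/eqP <-|/IH H]; first by rewrite Ai0 geq_minl.
case: (A a) => //; apply: leq_trans H; exact: geq_minr.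
Qed.

Lemma bigmin_ach (I : finType) (A : pred I) (F : I -> nat) x :
  let m := \big[minn/x]_(i | A i) F i in m = x \/ exists2 i, A i & m = F i.
Proof.
apply: (big_ind (fun n => n = x \/ exists2 i, A i & n = F i)); first by left.
  move=> a b Ha Hb /=; case: (leqP a b) => H.
    by [].
  by [].
by move=> i Ai; right; exists i.
Qed.

Lemma chi_le (T K : finType) (e : rel T) (f : T -> K) :
  dcol e f -> chi_dd e <= #|f @: [set: T]|.
Proof.
case=> Hp Hw Hy.
set P := preim_partition f [set: T].
have HPP : forall A, A \in P -> exists y, A = [set z | f z == f y].
  move=> A /imsetP [y _ ->]; exists y; apply/setP=> z; rewrite !inE eq_sym //.
have HP : dom_coloring e P.
  apply/and4P; split; first exact: preim_partitionP.
  - apply/forallP=> A; apply/implyP=> /HPP [y ->].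
    apply/forallP=> a; apply/implyP; rewrite inE => /eqP Ha.
    apply/forallP=> b; apply/implyP; rewrite inE => /eqP Hb.
    apply/negP=> /Hp; by rewrite Ha Hb eqxx.
  - apply/forallP=> w; have [y Hyw] := Hw w; apply/existsP; exists [set z | f z == f y].
    apply/andP; split.
      apply/imsetP; exists y => //; apply/setP=> z; rewrite !inE eq_sym //.
    apply/subsetP=> z; rewrite !inE => /eqP /Hyw [->|->]; by rewrite ?eqxx ?orbT.
  - apply/forallP=> A; apply/implyP=> /HPP [y ->].
    have [w Hyw] := Hy y; apply/existsP; exists w.
    apply/subsetP=> z; rewrite !inE => /eqP /Hyw [->|->]; by rewrite ?eqxx ?orbT.
rewrite /chi_dd; apply: leq_trans (@bigmin_le _ (fun P => dom_coloring e P) (fun P => #|P|) #|T| _ HP) _.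
have -> : P = (fun c => [set z | f z == c]) @: (f @: [set: T]).
  rewrite -imset_comp; apply: eq_imset => y /=; apply/setP=> z; rewrite !inE eq_sym //.
exact: leq_imset_card.
Qed.

Lemma chi_ex (T : finType) (e : rel T) : simple_graph e ->
  exists f : T -> {set T}, dcol e f /\ chi_dd e = #|f @: [set: T]|.
Proof.
case=> Hsym Hirr.
rewrite /chi_dd; have [->|[P HP ->]] := bigmin_ach (fun P : {set {set T}} => dom_coloring e P) (fun P => #|P|) #|T|.
  exists (fun x => [set x]); split; last by rewrite card_imset ?cardsT //; exact: set1_inj.
  split.
  - move=> x y Hxy; apply/negP=> /eqP /set1_inj Exy; by rewrite Exy Hirr in Hxy.
  - move=> w; exists w => z /set1_inj ->; by left.
  - move=> y; exists y => z /set1_inj ->; by left.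
case/and4P: HP => Hpart /forallP Hind /forallP Hdw /forallP Hdc.
have [/eqP Hcov Htriv H0] := and3P Hpart.
have Hin : forall x, x \in pblock P x by move=> x; rewrite mem_pblock Hcov inE.
have HPm : forall x, pblock P x \in P by move=> x; rewrite pblock_mem // Hcov inE.
have Hdef : forall A x, A \in P -> x \in A -> pblock P x = A by move=> A x; exact: def_pblock.
have Hne : forall A, A \in P -> exists x, x \in A.
  move=> A HA; have : A != set0 by apply/eqP=> E; rewrite -E HA in H0.
  by case/set0Pn=> x Hx; exists x.
have Hdom : forall (A : {set T}) w, A \subset cnbhd e w -> forall z, z \in A -> z = w \/ e w z.
  move=> A w Hs z Hz; have := subsetP Hs z Hz; rewrite inE => /orP [/eqP ->|]; by [left|right].
exists (fun x => pblock P x); split.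
  split.
  - move=> x y Hxy; apply/negP=> /eqP E.
    have := Hind (pblock P x); rewrite HPm => /forallP /(_ x) /implyP /(_ (Hin x)).
    move=> /forallP /(_ y) /implyP; rewrite E Hin => /(_ isT); by rewrite Hxy.
  - move=> w; have /existsP [A /andP [HA Hs]] := Hdw w.
    have [y Hy] := Hne A HA; exists y => z Ez; apply: (Hdom A) => //.
    by rewrite -(Hdef A y HA Hy) -Ez.
  - move=> y; have := Hdc (pblock P y); rewrite HPm => /existsP [w Hs].
    exists w => z Ez; apply: (Hdom _ _ Hs); by rewrite -Ez.
suff -> : (fun x => pblock P x) @: [set: T] = P by []. apply/setP=> A; apply/imsetP/idP=> [[x _ ->] //|HA].
have [y Hy] := Hne A HA; exists y => //; by rewrite (Hdef A y HA Hy).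
Qed.

Lemma simple_del (T : finType) (e : rel T) (v : T) :
  simple_graph e -> simple_graph (@del_vertex T e v).
Proof. case=> Hs Hi; split=> [x y|x]; rewrite /del_vertex; [exact: Hs | exact: Hi]. Qed.

Lemma split_T (T : finType) (v : T) (x : T) :
  x = v \/ exists x' : del_vertex_type v, x = val x'.
Proof.
case: (eqVneq x v) => [->|H]; [by left| right].
by exists (exist _ x H).
Qed.

Lemma lower (T : finType) (e : rel T) (v : T) :
  simple_graph e -> chi_dd e <= (chi_dd (@del_vertex T e v)).+1.
Proof.
move=> Hsg; have [Hs Hi] := Hsg.
have [f' [[Hp Hw Hy] ->]] := chi_ex (@simple_del T e v Hsg).
set f := fun x : T => omap f' (insub x : option (del_vertex_type v)).
have fv : f v = None by rewrite /f insubF //= eqxx.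
have fval : forall y, f (val y) = Some (f' y) by move=> y; rewrite /f valK.
have Hsv : forall y : del_vertex_type v, val y != v by move=> y; exact: (valP y).
have Hd : dcol e f.
  split.
  - move=> x y Hxy.
    case: (split_T v x) => [Ex|[x' Ex]]; case: (split_T v y) => [Ey|[y' Ey]]; subst.
    + by rewrite Hi in Hxy.
    + by rewrite fv fval.
    + by rewrite fv fval.
    + by rewrite !fval; apply: Hp.
  - move=> w; case: (split_T v w) => [->|[w' ->]].
      exists v => z; case: (split_T v z) => [->|[z' ->]]; first by left.
      by rewrite fv fval.
    have [y' Hy'] := Hw w'; exists (val y') => z.
    case: (split_T v z) => [->|[z' ->]]; first by rewrite fv fval.
    rewrite !fval => [[/Hy']] [->|H]; by [left|right].
  - move=> y; case: (split_T v y) => [->|[y' ->]].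
      exists v => z; case: (split_T v z) => [->|[z' ->]]; first by left.
      by rewrite fv fval.
    have [w' Hw'] := Hy y'; exists (val w') => z.
    case: (split_T v z) => [->|[z' ->]]; first by rewrite fv fval.
    rewrite !fval => [[/Hw']] [->|H]; by [left|right].
apply: (leq_trans (chi_le Hd)).
have Hsub : f @: [set: T] \subset None |: (Some @: (f' @: [set: del_vertex_type v])).
  apply/subsetP=> c /imsetP [x _ ->]; case: (split_T v x) => [->|[x' ->]].
    by rewrite fv setU11.
  by rewrite fval setU1r //; apply: imset_f; apply: imset_f.
apply: (leq_trans (subset_leq_card Hsub)); rewrite cardsU1 card_imset //.
  by case: (None \notin _).
by move=> a b [].
Qed.

Lemma upper (T : finType) (e : rel T) (v : T) :
  simple_graph e -> connected_graph e ->
  chi_dd (@del_vertex T e v) <= chi_dd e + deg e v - 1.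
Proof.
move=> Hsg Hcon; have [Hs Hi] := Hsg.
case: (boolP [exists x, x != v]) => [/existsP [u Hu]|Hno]; last first.
  have [f' [_ ->]] := chi_ex (@simple_del T e v Hsg).
  apply: leq_trans (leq_imset_card _ _) _; rewrite cardsT.
  suff -> : #|del_vertex_type v| = 0 by [].
  apply: eq_card0 => y; exfalso; move/negP: Hno; apply; apply/existsP.
  by exists (val y); exact: (valP y).
have Hdeg : 0 < deg e v.
  have /connectP [p Hp Hl] := Hcon v u.
  case: p Hp Hl => [|z p] /=; first by move=> _ E; rewrite E eqxx in Hu.
  case/andP=> Hz _ _; rewrite /deg card_gt0; apply/set0Pn; exists z; by rewrite inE.
have [f [[Hp Hw Hy] ->]] := chi_ex Hsg.
set S := fun x => [forall z, (f z == f x) ==> e v z] || [forall z, (f z == f v) ==> (z == v)].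
set g := fun y : del_vertex_type v =>
  if e v (val y) && S (val y) then (inl (val y) : (T + {set T})%type) else inr (f (val y)).
have ginl : forall y' z', g z' = inl (val y') -> z' = y'.
  move=> y' z'; rewrite /g; case: ifP => // _ [Ez]; exact: val_inj.
have ginr : forall c z', g z' = inr c -> f (val z') = c.
  move=> c z'; rewrite /g; case: ifP => // _ [Ez]; exact: Ez.
have Hd : dcol (@del_vertex T e v) g.
  split.
  - move=> y z Hyz; rewrite /g; case: ifP => _; case: ifP => _ //.
      apply/eqP => [[E]]; have Eyz := val_inj E; subst; by rewrite /del_vertex Hi in Hyz.
    apply/eqP => [[E]]; have := Hp _ _ Hyz; by rewrite E eqxx.
  - move=> w'; have [y0 Hy0] := Hw (val w').
    case: (boolP [exists y' : del_vertex_type v, (f (val y') == f y0) && ~~ (e v (val y') && S (val y'))]).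
      case/existsP => y' /andP [/eqP Ey' Hn']; exists y' => z' Ez'.
      have gy : g y' = inr (f y0) by rewrite /g (negbTE Hn') Ey'.
      rewrite gy in Ez'; have := Hy0 _ (ginr _ _ Ez') => [[E|E]]; [left; exact: val_inj|by right].
    rewrite negb_exists => /forallP Hall.
    case: (boolP [exists y' : del_vertex_type v, f (val y') == f y0]).
      case/existsP => y' /eqP Ey'.
      have H' : e v (val y') && S (val y') by have := Hall y'; rewrite Ey' eqxx /= negbK.
      exists y' => z' Ez'.
      have gy : g y' = inl (val y') by rewrite /g H'.
      rewrite gy in Ez'; have Ez := ginl _ _ Ez'; subst z'.
      have := Hy0 _ Ey' => [[E|E]]; [left; exact: val_inj|by right].
    rewrite negb_exists => /forallP Hno.
    case: (split_T v y0) => [Ey0|[y0' Ey0]]; last first.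
      by have := Hno y0'; rewrite -Ey0 eqxx.
    subst y0.
    have ewv : e v (val w').
      have := Hy0 v erefl => [[E|E]]; last by rewrite Hs.
      by have := valP w'; rewrite -E eqxx.
    have Sw : S (val w').
      apply/orP; right; apply/forallP => z; apply/implyP => /eqP Ez.
      case: (split_T v z) => [->|[z' Ez']]; first by rewrite eqxx.
      by have := Hno z'; rewrite -Ez' Ez eqxx.
    exists w' => z' Ez'.
    have gw : g w' = inl (val w') by rewrite /g ewv Sw.
    rewrite gw in Ez'; left; exact: ginl _ _ Ez'.
  - move=> y'; case Hc: (e v (val y') && S (val y')).
      exists y' => z' Ez'.
      have gy : g y' = inl (val y') by rewrite /g Hc.
      rewrite gy in Ez'; left; exact: ginl _ _ Ez'.
    have gy : g y' = inr (f (val y')) by rewrite /g Hc.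
    have [w0 Hw0] := Hy (val y').
    case: (split_T v w0) => [Ew0|[w0' Ew0]].
      subst w0; exfalso.
      have ev : e v (val y').
        have := Hw0 _ erefl => [[E|E]] //.
        by have := valP y'; rewrite E eqxx.
      rewrite ev /= in Hc; move/negbT: Hc; rewrite negb_or => /andP [H1 H2].
      move: H1; rewrite negb_forall => /existsP [z]; rewrite negb_imply => /andP [/eqP Ez Hz].
      have Ezv : z = v by have := Hw0 _ Ez => [[E|E]] //; rewrite E in Hz.
      subst z.
      move: H2; rewrite negb_forall => /existsP [z2]; rewrite negb_imply => /andP [/eqP Ez2 Hz2].
      have ez2 : e v z2.
        have := Hw0 z2 (etrans Ez2 Ez) => [[E|E]] //; by rewrite E eqxx in Hz2.
      by have := Hp _ _ ez2; rewrite Ez2 eqxx.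
    exists w0' => z' Ez'; rewrite gy in Ez'.
    have := Hw0 _ (ginr _ _ Ez') => [[E|E]]; [left; apply: val_inj; by rewrite E Ew0|right].
    by rewrite /del_vertex -Ew0.
apply: (leq_trans (chi_le Hd)).
set X := [set x | (x != v) && ~~ (e v x && S x)].
have Hsub : g @: [set: del_vertex_type v] \subset
    ((@inl T {set T}) @: [set u | e v u]) :|: ((@inr T {set T}) @: (f @: X)).
  apply/subsetP=> c /imsetP [y' _ ->]; rewrite /g; case: ifP => H; rewrite in_setU; apply/orP.
    left; apply: imset_f; rewrite inE; by case/andP: H.
  right; apply: imset_f; apply: imset_f; by rewrite inE (valP y') H.
have Hc1 := leq_trans (subset_leq_card Hsub) (leq_card_setU _ _).1.
have inl_i : injective (@inl T {set T}) by move=> a b [].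
have inr_i : injective (@inr T {set T}) by move=> a b [].
rewrite (card_imset _ inl_i) (card_imset _ inr_i) in Hc1.
case: (boolP [exists y' : del_vertex_type v, e v (val y') && S (val y')]).
  case/existsP => y' /andP [ey' Sy'].
  set c := if [forall z, (f z == f (val y')) ==> e v z] then f (val y') else f v.
  have HX : f @: X \subset (f @: [set: T]) :\ c.
    apply/subsetP=> d /imsetP [x Hx ->]; rewrite in_setD1 imset_f ?inE // andbT.
    move: Hx; rewrite inE => /andP [Hxv HxS].
    rewrite /c; case: ifP => F1.
      apply/eqP => Exy; move: HxS; rewrite negb_and; apply/negP; rewrite negb_or !negbK.
      apply/andP; split.
        by have := (forallP F1) x; rewrite Exy eqxx.
      by apply/orP; left; rewrite /= Exy.
    rewrite /S F1 /= in Sy'.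
    apply/eqP => Exv; have := (forallP Sy') x; rewrite Exv eqxx /= => Hxv'.
    by rewrite Hxv' in Hxv.
  have := subset_leq_card HX.
  have Hcin : c \in f @: [set: T] by rewrite /c; case: ifP => _; apply: imset_f; rewrite inE.
  rewrite (cardsD1 c (f @: [set: T])) Hcin.
  move=> H; rewrite /deg in Hdeg *; lia.
rewrite negb_exists => /forallP Hnone.
have Hsub2 : g @: [set: del_vertex_type v] \subset (@inr T {set T}) @: (f @: [set: T]).
  apply/subsetP=> c /imsetP [y' _ ->]; rewrite /g (negbTE (Hnone y')).
  by apply: imset_f; apply: imset_f.
have := subset_leq_card Hsub2; rewrite (card_imset _ inr_i).
move=> H; rewrite /deg in Hdeg *; lia.
Qed.

Theorem theorem1 (T : finType) (e : rel T) (v : T) :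
  simple_graph e -> connected_graph e -> ~ cut_vertex e v ->
  chi_dd e - 1 <= chi_dd (@del_vertex T e v) <= chi_dd e + deg e v - 1.
Proof.
move=> Hsg Hcon _; apply/andP; split.
  have := lower v Hsg; lia.
exact: upper.
Qed.
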